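(* Let $G=(V,E)$ be an undirected graph with positive edge weights $\mathsf{w}$, let $s\in V$ be a source, and suppose we are given, for every $v\in V$, the distance $d_s(v)$ from $s$, the number $\sigma_s(v)$ of shortest $s$-$v$ paths, and the list $P_s(v)$ of predecessors of $v$ (neighbors immediately preceding $v$ on shortest $s$-$v$ paths) in $G$. Let $\beta$ be a batch of edge insertions. Consider the algorithm \textsf{UpdateSSSPW}, using a min-priority queue $Q$ (heap) supporting insert, decrease-key and extract-min in logarithmic time: (i) For each $e=\{u,v\}\in\beta$: insert $e$ into $E$; if $d_s(v)\ge d_s(u)+\mathsf{w}(e)$, insert $v$ into $Q$ with priority $d_s(u)+\mathsf{w}(e)$, or, if $v$ is already in $Q$ with larger priority, decrease its priority to this value; symmetrically for $u$ with priority $d_s(v)+\mathsf{w}(e)$ when $d_s(u)\ge d_s(v)+\mathsf{w}(e)$. (ii) While $Q\neq\emptyset$: extract the minimum $(w,p)$; set $d_s(w)\leftarrow p$, $P_s(w)\leftarrow\emptyset$, $\sigma_s(w)\leftarrow 0$; for each incident edge $\{z,w\}$: if $d_s(w)=d_s(z)+\mathsf{w}(\{z,w\})$, add $z$ to $P_s(w)$ and set $\sigma_s(w)\leftarrow\sigma_s(w)+\sigma_s(z)$; if $d_s(z)\ge d_s(w)+\mathsf{w}(\{z,w\})$, insert $z$ into $Q$ with priority $d_s(w)+\mathsf{w}(\{z,w\})$, or decrease its priority to this value if it is already in $Q$ with larger priority. Then the time required by \textsf{UpdateSSSPW} to update the distances, the numbers of shortest paths and the lists of predecessors is $O(|\b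eta|\log|\beta|+\|A\|\log\|A\|)$.
   Context: $A$ denotes the set of affected nodes, i.e. nodes whose distance from $s$ or whose number of shortest paths from $s$ changes as a consequence of inserting the batch $\beta$; $\|A\|$ denotes $|A|$ plus the number of edges having at least one endpoint in $A$; $|\beta|$ is the number of edges in the batch. *)

(* Defs.v *)
From HB Require Import structures.
From mathcomp Require Import all_boot all_order all_algebra.
Set Implicit Arguments. Unset Strict Implicit. Unset Printing Implicit Defensive.
Import Order.TTheory GRing.Theory Num.Theory.
Local Open Scope ring_scope.

Section Graphs.
Variables (R : realDomainType) (V : finType).

Definition spath (G : rel V) (s v : V) (p : seq V) : bool :=
  [&& path G s p, last s p == v & uniq (s :: p)].

Definition pweight (wt : V -> V -> R) (s : V) (p : seq V) : R :=
  \sum_(x <- pairmap wt s p) x.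

(* d is the shortest-path distance from s to v in G (weights wt);
   simple paths have at most #|V| - 1 edges. *)
Definition isdist (G : rel V) (wt : V -> V -> R) (s v : V) (d : R) : bool :=
  [exists n : 'I_#|V|, exists p : n.-tuple V, spath G s v p && (pweight wt s p == d)]
  && [forall n : 'I_#|V|, forall p : n.-tuple V, spath G s v p ==> (d <= pweight wt s p)].

(* number of s-v paths of weight d (= sigma_s(v) when d is the distance) *)
Definition nsp (G : rel V) (wt : V -> V -> R) (s v : V) (d : R) : nat :=
  (\sum_(n < #|V|) #|[set p : n.-tuple V | spath G s v p && (pweight wt s p == d)]|)%N.

Definition addedge (G : rel V) (u v : V) : rel V :=
  fun x y => [|| G x y, (x == u) && (y == v) | (x == v) && (y == u)].

Definition addbatch (G : rel V) (beta : seq (V * V)) : rel V :=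
  foldl (fun g e => addedge g e.1 e.2) G beta.

Definition affected (G' : rel V) (wt : V -> V -> R) (s : V)
    (d0 : V -> R) (sg0 : V -> nat) : {set V} :=
  [set v | ~~ (isdist G' wt s v (d0 v) && (nsp G' wt s v (d0 v) == sg0 v))].

(* ||A|| = |A| + number of (undirected) edges of G' with an endpoint in A *)
Definition normA (G' : rel V) (A : {set V}) : nat :=
  (#|A| + #|[set e : {set V} | [exists u, exists v,
        [&& e == [set u; v], G' u v & (u \in A) || (v \in A)]]]|)%N.

Record state := State {
  dd : V -> R;
  sg : V -> nat;
  PP : V -> {set V};
  EE : rel V;
  QQ : V -> option R;          (* heap contents: node |-> priority *)
  batch : seq (V * V);         (* edges of beta still to be inserted *)
  cur : option (V * {set V})   (* node being scanned, incident edges left *)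
}.

Definition upd {T : Type} (f : V -> T) (z : V) (a : T) : V -> T :=
  fun x => if x == z then a else f x.

Definition qsize (Q : V -> option R) : nat := #|[pred x | isSome (Q x)]|.

Definition heapcost (n : nat) : nat := (trunc_log 2 n).+1.

Definition relax (d : V -> R) (Q : V -> option R) (z : V) (p : R)
    : (V -> option R) * nat :=
  if p <= d z then
    match Q z with
    | None => (upd Q z (Some p), heapcost (qsize Q))
    | Some q => if p < q then (upd Q z (Some p), heapcost (qsize Q)) else (Q, 1%N)
    end
  else (Q, 1%N).

Variable wt : V -> V -> R.

Definition batch_step (st : state) (u v : V) (rest : seq (V * V)) : state * nat :=
  let d := dd st in
  let (Q1, c1) := relax d (QQ st) v (d u + wt u v) in
  let (Q2, c2) := relax d Q1 u (d v + wt v u) in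
  (State d (sg st) (PP st) (addedge (EE st) u v) Q2 rest None, (1 + c1 + c2)%N).

Definition extract_step (st : state) (w : V) (p : R) : state * nat :=
  ((State (upd (dd st) w p) (upd (sg st) w 0%N) (upd (PP st) w set0) (EE st)
         (upd (QQ st) w None) (batch st) (Some (w, [set z | EE st z w]))),
   (1 + heapcost (qsize (QQ st)))%N).

Definition scan_step (st : state) (w : V) (N : {set V}) (z : V) : state * nat :=
  let d := dd st in
  let isp := d w == d z + wt z w in
  let P' := if isp then upd (PP st) w (z |: PP st w) else PP st in
  let s' := if isp then upd (sg st) w (sg st w + sg st z)%N else sg st in
  let (Q', c) := relax d (QQ st) z (d w + wt z w) in
  (State d s' P' (EE st) Q' (batch st) (Some (w, N :\ z)), (1 + c)%N).

Inductive step : state -> state -> nat -> Prop :=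
| StepBatch st u v rest :
    batch st = (u, v) :: rest -> cur st = None ->
    step st (batch_step st u v rest).1 (batch_step st u v rest).2
| StepExtract st w p :
    batch st = [::] -> cur st = None -> QQ st w = Some p ->
    (forall z q, QQ st z = Some q -> p <= q) ->
    step st (extract_step st w p).1 (extract_step st w p).2
| StepScan st w N z :
    cur st = Some (w, N) -> z \in N ->
    step st (scan_step st w N z).1 (scan_step st w N z).2
| StepDone st w :
    cur st = Some (w, set0) ->
    step st (State (dd st) (sg st) (PP st) (EE st) (QQ st) (batch st) None) 1.

Inductive steps : state -> state -> nat -> Prop :=
| steps_refl st : steps st st 0
| steps_cons st1 st2 st3 k1 k2 :
    step st1 st2 k1 -> steps st2 st3 k2 -> steps st1 st3 (k1 + k2)%N.

Definition init_state (G : rel V) (beta : seq (V * V)) (d0 : V -> R)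
    (sg0 : V -> nat) (P0 : V -> {set V}) : state :=
  State d0 sg0 P0 G (fun _ => None) beta None.

End Graphs.

Definition nlogn (n : nat) : nat := (n * (trunc_log 2 n).+1)%N.

(* Main.v *)
Require Import Defs.
From HB Require Import structures.
From mathcomp Require Import all_boot all_order all_algebra lra zify.
Import Order.TTheory GRing.Theory Num.Theory.
Local Open Scope ring_scope.
Set Implicit Arguments. Unset Strict Implicit. Unset Printing Implicit Defensive.

Section Proof.
Variables (R : realDomainType) (V : finType) (G : rel V) (wt : V -> V -> R)
    (s : V) (beta : seq (V * V)) (d0 : V -> R) (sg0 : V -> nat) (P0 : V -> {set V}).
Hypothesis Gsym : symmetric G.
Hypothesis Girr : irreflexive G.
Hypothesis wsym : forall x y, wt x y = wt y x.
Hypothesis wpos : forall x y, 0 < wt x y.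
Hypothesis bnew : forall e, e \in beta -> (e.1 != e.2) && ~~ G e.1 e.2.
Hypothesis d0d : forall v, isdist G wt s v (d0 v).
Hypothesis sg0d : forall v, sg0 v = nsp G wt s v (d0 v).

Let G' := addbatch G beta.
Let A := affected G' wt s d0 sg0.

Lemma addbatch_mono (E : rel V) bs x y : E x y -> addbatch E bs x y.
Proof.
elim: bs E => [|[u v] bs IH] E //= H; apply: IH; by rewrite /addedge H.
Qed.

Lemma addbatchE (E : rel V) bs x y : addbatch E bs x y =
  E x y || has (fun e : V * V => ((x == e.1) && (y == e.2)) || ((x == e.2) && (y == e.1))) bs.
Proof.
elim: bs E => [|[u v] bs IH] E /=; first by rewrite orbF.
by rewrite IH /addedge /= !orbA.
Qed.

Lemma addbatch_sym (E : rel V) bs : symmetric E -> symmetric (addbatch E bs).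
Proof.
move=> Es x y; rewrite !addbatchE Es; congr orb.
apply: eq_has => -[u v] /=.
by case: (x == u); case: (y == v); case: (x == v); case: (y == u).
Qed.

Lemma G'sym : symmetric G'.
Proof. exact: addbatch_sym. Qed.

Lemma G_G' x y : G x y -> G' x y.
Proof. exact: addbatch_mono. Qed.

Lemma pweight_cons a y p : pweight wt a (y :: p) = wt a y + pweight wt y p.
Proof. by rewrite /pweight /= big_cons. Qed.

Lemma pweight_cat a p q : pweight wt a (p ++ q) = pweight wt a p + pweight wt (last a p) q.
Proof. by rewrite /pweight pairmap_cat big_cat. Qed.

Lemma pweight_ge0 a p : 0 <= pweight wt a p.
Proof.
elim: p a => [|y p IH] a; first by rewrite /pweight big_nil.
by rewrite pweight_cons addr_ge0 // ltW.
Qed.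

Lemma spath_size (E : rel V) z Q : spath E s z Q -> (size Q < #|V|)%N.
Proof.
case/and3P=> _ _ U.
have := card_uniqP U => /= Hc.
have := max_card (mem (s :: Q)). by rewrite Hc.
Qed.

Lemma dist_le (E : rel V) z d Q : isdist E wt s z d -> spath E s z Q -> d <= pweight wt s Q.
Proof.
case/andP=> _ /forallP H sp.
have /forallP := H (Ordinal (spath_size sp)).
move/(_ (in_tuple Q))/implyP; exact.
Qed.


Definition W (x : V) (p : R) := exists P, [&& spath G' s x P, pweight wt s P <= p & ~~ path G s P].

Lemma spath_GG' z Q : spath G s z Q -> spath G' s z Q.
Proof. by case/and3P=> pG lG uG; rewrite /spath (sub_path G_G' pG) lG uG. Qed.

Lemma ext x z P p : spath G' s x P -> pweight wt s P <= p -> ~~ (path G s P && G x z) ->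
  G' x z -> p + wt x z <= d0 z -> W z (p + wt x z).
Proof.
move=> sp pw ng e le.
case/and3P: (sp) => pa la U.
have wz := wpos x z.
case zP: (z \in s :: P).
- have [Q [spQ lwQ]] : exists Q, spath G' s z Q /\ pweight wt s Q <= pweight wt s P.
    move: zP; rewrite in_cons => /orP [/eqP->|zP].
      exists [::]; split; first by rewrite /spath /= eqxx.
      by rewrite {1}/pweight big_nil; exact: pweight_ge0.
    move: pa U; case/path.splitP: zP => P1 P2.
    rewrite cat_path -cat_cons cat_uniq => /andP[pa1 _] /andP[u1 _].
    exists (rcons P1 z); split; first by rewrite /spath pa1 last_rcons eqxx u1.
    rewrite pweight_cat lerDl; exact: pweight_ge0.
  case gQ: (path G s Q).
  + have : spath G s z Q by move: spQ; rewrite /spath gQ => /and3P[_ -> ->].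
    move/(dist_le (d0d z)) => h. exfalso; lra.
  + exists Q; rewrite spQ gQ /=; lra.
- exists (rcons P z).
  have lx : last s P = x by apply/eqP.
  rewrite /spath rcons_path pa lx e last_rcons eqxx /=.
  move: zP U; rewrite mem_rcons rcons_uniq !inE /= => /norP[zs zP] /andP[sP uP].
  rewrite (negbTE sP) orbF eq_sym zs zP uP /=.
  rewrite rcons_path lx ng andbT -cats1 pweight_cat lx pweight_cons {2}/pweight /= big_nil.
  lra.
Qed.

Lemma nsp_sub n z d : [set p : n.-tuple V | spath G s z p && (pweight wt s p == d)]
   \subset [set p : n.-tuple V | spath G' s z p && (pweight wt s p == d)].
Proof.
apply/subsetP => t; rewrite !inE => /andP[spG ->]; by rewrite andbT spath_GG'.
Qed.

Lemma W_aff x p : W x p -> p <= d0 x -> x \in A.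
Proof.
case=> P /and3P[sp pw ng] le.
rewrite inE negb_and; case dI: (isdist G' wt s x (d0 x)) => //=.
have eqw : pweight wt s P = d0 x.
  by apply/eqP; rewrite eq_le (le_trans pw le) (dist_le dI sp).
rewrite sg0d neq_ltn; apply/orP; right.
rewrite /nsp (bigD1 (Ordinal (spath_size sp))) // [X in (_ < X)%N](bigD1 (Ordinal (spath_size sp))) //=.
rewrite -addSn leq_add //.
  apply: proper_card; apply/properP; split; first exact: nsp_sub.
  exists (in_tuple P); first by rewrite !inE /= sp eqw eqxx.
  by rewrite !inE /= /spath (negbTE ng).
apply: leq_sum => i _; apply: subset_leq_card; exact: nsp_sub.
Qed.

Definition Qok (d : V -> R) (M : {set V}) (Q : V -> option R) :=
  forall x q, Q x = Some q ->
    [/\ q <= d x, x \notin M, W x q & forall y, y \in M -> d y <= q].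

Lemma qsize_le (d : V -> R) (M : {set V}) (Q : V -> option R) : Qok d M Q -> (forall x, x \notin M -> d x = d0 x) ->
  (qsize Q <= #|A|)%N.
Proof.
move=> Qk J1; apply: subset_leq_card; apply/subsetP => x; rewrite inE.
case Qx: (Q x) => [q|] // _.
have [h1 h2 h3 _] := Qk x q Qx.
apply: W_aff h3 _; by rewrite -(J1 x h2).
Qed.

Lemma relax_cost (d : V -> R) (Q : V -> option R) z p : ((relax d Q z p).2 <= heapcost (qsize Q))%N.
Proof.
rewrite /relax; case: ifP => _ //; case: (Q z) => [q|] //; by case: ifP.
Qed.

Lemma relax_ok (d : V -> R) (M : {set V}) (Q : V -> option R) z p : Qok d M Q ->
  (p <= d z -> [/\ z \notin M, W z p & forall y, y \in M -> d y <= p]) ->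
  Qok d M (relax d Q z p).1.
Proof.
move=> Qk Hz.
have Hu : Qok d M (upd Q z (Some p)) -> Qok d M (upd Q z (Some p)) by [].
rewrite /relax; case: ifP => pd //.
have [z1 z2 z3] := Hz pd.
have U : Qok d M (upd Q z (Some p)).
  move=> x q; rewrite /upd; case: eqP => [-> [<-]|_]; last exact: Qk.
  by split.
by case: (Q z) => [q|] //=; case: ifP.
Qed.

Lemma heapcost_mono m n : (m <= n)%N -> (heapcost m <= heapcost n)%N.
Proof. by move=> h; rewrite /heapcost ltnS leq_trunc_log. Qed.

Let deg x := #|[set z | G' z x]|.
Let H := heapcost #|A|.

Definition rem (c : option (V * {set V})) : nat :=
  match c with Some (_, N) => #|N|.+1 | None => 0%N end.

Definition Pot (st : state R V) : nat := (3 * H * (size (batch st) + rem (cur st)))%N.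
Definition RM (M : {set V}) : nat := (3 * H * \sum_(x in M) (2 + deg x))%N.

Definition Inv (st : state R V) (M : {set V}) :=
  [/\ addbatch (EE st) (batch st) = G',
      {subset batch st <= beta},
      forall x, x \notin M -> dd st x = d0 x,
      forall x, x \in M -> dd st x <= d0 x /\ W x (dd st x) &
      [/\ Qok (dd st) M (QQ st),
      batch st != [::] -> M = set0 &
      forall w N, cur st = Some (w, N) ->
        [/\ w \in M, (forall z, z \in N -> G' z w) & forall y, y \in M -> dd st y <= dd st w]]].

Lemma H_ge1 : (1 <= H)%N.
Proof. by []. Qed.
Lemma step_inv st st' k M : Inv st M -> step wt st st' k ->
  exists M', Inv st' M' /\ (k + Pot st' + RM M <= Pot st + RM M')%N.
Proof.
move=> I0 Hs; case: Hs I0.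
- move=> st0 u v rest hb hc [J0 J7 J1 J2 [Qk J6 J5]].
  have M0 : M = set0 by apply: J6; rewrite hb.
  subst M.
  have dE : forall x, dd st0 x = d0 x by move=> x; apply: J1; rewrite inE.
  have uvb : (u, v) \in beta by apply: J7; rewrite hb mem_head.
  have /andP[_ nGuv] := bnew uvb; rewrite /= in nGuv.
  have [G'uv G'vu] : G' u v /\ G' v u.
    rewrite -J0 hb /=; split; apply: addbatch_mono; by rewrite /addedge !eqxx !orbT.
  have Wfrom : forall a b, ~~ G a b -> G' a b -> d0 a + wt a b <= d0 b -> W b (d0 a + wt a b).
    move=> a b nG Gab le.
    case/andP: (d0d a) => /existsP[n /existsP[P /andP[spP /eqP wP]]] _.
    apply: (ext (P:=P)) => //; [exact: spath_GG' | by rewrite wP | by rewrite negb_and nG orbT].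
  rewrite /batch_step.
  case E1: (relax _ _ v _) => [Q1 c1]; case E2: (relax _ Q1 u _) => [Q2 c2] /=.
  have Qk1 : Qok (dd st0) set0 Q1.
    have := relax_ok (Q := QQ st0) (z := v) (p := dd st0 u + wt u v) Qk.
    rewrite E1 /=; apply => le.
    split; [by rewrite inE | | by move=> y; rewrite inE].
    rewrite !dE in le *; exact: Wfrom.
  have Qk2 : Qok (dd st0) set0 Q2.
    have := relax_ok (Q := Q1) (z := u) (p := dd st0 v + wt v u) Qk1.
    rewrite E2 /=; apply => le.
    split; [by rewrite inE | | by move=> y; rewrite inE].
    rewrite !dE in le *; apply: Wfrom => //; by rewrite Gsym.
  have c1le : (c1 <= H)%N.
    have := relax_cost (dd st0) (QQ st0) v (dd st0 u + wt u v); rewrite E1 /= => h.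
    apply: (leq_trans h); apply: heapcost_mono; exact: qsize_le Qk J1.
  have c2le : (c2 <= H)%N.
    have := relax_cost (dd st0) Q1 u (dd st0 v + wt v u); rewrite E2 /= => h.
    apply: (leq_trans h); apply: heapcost_mono; exact: qsize_le Qk1 J1.
  exists set0; split.
    split => /=.
    + by rewrite -J0 hb.
    + by move=> e he; apply: J7; rewrite hb inE he orbT.
    + exact: J1.
    + by move=> x; rewrite inE.
    + by split.
  rewrite /Pot hb hc /=.
  have := H_ge1; nia.
- move=> st0 w p hb hc Qw hmin [J0 J7 J1 J2 [Qk J6 J5]].
  have [pw wM Wp Mp] := Qk w p Qw.
  have EG : EE st0 = G' by rewrite -J0 hb.
  exists (w |: M); rewrite /extract_step /=; split.
    split => //=.
    + move=> x; rewrite in_setU1 negb_or => /andP[xw xM]; rewrite /upd (negbTE xw); exact: J1.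
    + move=> x; rewrite in_setU1 /upd; case: (x =P w) => [-> _|_ /= xM]; last exact: J2.
      by split => //; rewrite -(J1 w wM).
    split.
    + move=> x q; rewrite /upd; case: (x =P w) => // /eqP xw Qx.
      have [h1 h2 h3 h4] := Qk x q Qx.
      split => //; first by rewrite in_setU1 negb_or xw h2.
      move=> y; rewrite in_setU1; case: (y =P w) => [-> _|_ /= yM]; [exact: hmin Qx | exact: h4].
    + by rewrite hb.
    + move=> w' N [<- <-]; split; first by rewrite setU11.
        by move=> z; rewrite inE EG.
      move=> y yM'; rewrite /upd eqxx; case: ifP => [_|/negbT yw]; first exact: lexx.
      by move: yM'; rewrite in_setU1 (negbTE yw) /= => yM; exact: Mp.
  rewrite /Pot /RM hb hc /= big_setU1 //= EG.
  have hc' : (heapcost (qsize (QQ st0)) <= H)%N.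
    apply: heapcost_mono; exact: qsize_le Qk J1.
  rewrite /deg; have := H_ge1; nia.
- move=> st0 w N z hc zN [J0 J7 J1 J2 [Qk J6 J5]].
  have [wM Nw My] := J5 w N hc.
  have [dw Ww] := J2 w wM.
  rewrite /scan_step.
  case E: (relax _ _ z _) => [Q' c] /=.
  have Qk' : Qok (dd st0) M Q'.
    have := relax_ok (Q := QQ st0) (z := z) (p := dd st0 w + wt z w) Qk.
    rewrite E /=; apply => le.
    have zM : z \notin M.
      apply/negP => zM; have h2 := My z zM; have h1 := wpos z w.
      have := le_trans le h2; rewrite gerDl => /(lt_le_trans h1); by rewrite ltxx.
    split => //; last first.
      move=> y yM; apply: (le_trans (My y yM)); rewrite lerDl; exact: ltW (wpos z w).
    case: Ww => P /and3P[spP pwP ngP].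
    have dz : dd st0 z = d0 z := J1 z zM.
    rewrite wsym; apply: (ext spP pwP).
    + by rewrite (negbTE ngP).
    + by rewrite G'sym; exact: Nw.
    + by rewrite -wsym -dz.
  have cle : (c <= H)%N.
    have := relax_cost (dd st0) (QQ st0) z (dd st0 w + wt z w); rewrite E /= => h.
    apply: (leq_trans h); apply: heapcost_mono; exact: qsize_le Qk J1.
  exists M; split.
    split => //=; split => //.
    move=> w' N' [<- <-]; split => // z'; rewrite in_setD1 => /andP[_]; exact: Nw.
  rewrite /Pot hc /= (cardsD1 z N) zN.
  have := H_ge1; nia.
- move=> st0 w hc [J0 J7 J1 J2 [Qk J6 J5]].
  exists M; split; first by split => //; split.
  rewrite /Pot hc /= cards0.
  have := H_ge1; nia.
Qed.

Lemma steps_inv st st' k M : Inv st M -> steps wt st st' k ->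
  exists M', Inv st' M' /\ (k + Pot st' + RM M <= Pot st + RM M')%N.
Proof.
move=> I0 Hs; elim: Hs M I0 => {st st' k}.
  by move=> st M I0; exists M; split => //; rewrite add0n.
move=> st1 st2 st3 k1 k2 H1 _ IH M I1.
have [M2 [I2 c2]] := step_inv I1 H1.
have [M3 [I3 c3]] := IH M2 I2.
exists M3; split => //; lia.
Qed.
Lemma set2_eq (a b a' b' : V) : [set a; b] = [set a'; b'] ->
  (a = a' /\ b = b') \/ (a = b' /\ b = a').
Proof.
move=> E.
have : a \in [set a'; b'] by rewrite -E set21.
have : b \in [set a'; b'] by rewrite -E set22.
have : a' \in [set a; b] by rewrite E set21.
have : b' \in [set a; b] by rewrite E set22.
rewrite !inE => /orP[]/eqP h1 /orP[]/eqP h2 /orP[]/eqP h3 /orP[]/eqP h4; subst; auto.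
Qed.

Lemma deg_sum (X : {set V}) :
  (\sum_(x in X) #|[set z | G' z x]| <=
   2 * #|[set e : {set V} | [exists u, exists v,
        [&& e == [set u; v], G' u v & (u \in X) || (v \in X)]]]|)%N.
Proof.
set Es := [set e : {set V} | _].
have -> : (\sum_(x in X) #|[set z | G' z x]| =
           #|[set p : V * V | (p.1 \in X) && G' p.2 p.1]|)%N.
  rewrite -sum1_card.
  under eq_bigr => x _ do rewrite -sum1_card.
  rewrite pair_big_dep; apply: eq_bigl => -[a b]; by rewrite !inE.
set S := [set p : V * V | _].
pose f (p : V * V) := ([set p.1; p.2], (enum_rank p.1 < enum_rank p.2)%N).
have finj : {in S &, injective f}.
  move=> [a b] [a' b'] _ _ [/set2_eq [[-> ->]|[h1 h2]]] // hb.
  subst a b.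
  have : enum_rank a' = enum_rank b'.
    move: hb; case: (ltngtP (enum_rank b') (enum_rank a')) => // h _.
    by apply: ord_inj; rewrite h.
  by move/enum_rank_inj => ->.
rewrite -(card_in_imset finj).
have : [set f x | x in S] \subset setX Es [set: bool].
  apply/subsetP => _ /imsetP[[a b] + ->]; rewrite !inE /= => /andP[aX Gba].
  rewrite andbT; apply/existsP; exists b; apply/existsP; exists a.
  by rewrite setUC eqxx Gba aX orbT.
move/subset_leq_card; rewrite cardsX cardsT card_bool => h.
by rewrite mulnC.
Qed.

Lemma Inv_init : Inv (init_state G beta d0 sg0 P0) set0.
Proof.
split => //=.
by move=> x; rewrite inE.
Qed.

Lemma final st k : steps wt (init_state G beta d0 sg0 P0) st k ->
  (k <= 3 * H * size beta + 3 * H * (2 * normA G' A))%N.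
Proof.
move=> Hs.
have [M [[J0 J7 J1 J2 _] c1]] := steps_inv Inv_init Hs.
have MA : M \subset A.
  apply/subsetP => x xM; have [h1 h2] := J2 x xM; exact: W_aff h2 h1.
have sumM : (\sum_(x in M) (2 + deg x) <= 2 * normA G' A)%N.
  apply: (@leq_trans (\sum_(x in A) (2 + deg x))).
    rewrite [X in (_ <= X)%N](big_setID M) /= (setIidPr MA); exact: leq_addr.
  rewrite big_split /= sum_nat_const /normA mulnDr.
  rewrite mulnC leq_add2l; exact: deg_sum.
move: c1; rewrite /Pot /RM /= big_set0 muln0 addn0 => c1.
have : (3 * H * \sum_(x in M) (2 + deg x) <= 3 * H * (2 * normA G' A))%N.
  by rewrite leq_mul2l sumM orbT.
lia.
Qed.




End Proof.

Lemma arith b a n k : (a <= n)%N ->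
  (k <= 3 * (trunc_log 2 a).+1 * b + 3 * (trunc_log 2 a).+1 * (2 * n))%N ->
  (k <= 9 * (1 + nlogn b + nlogn n))%N.
Proof.
move=> an hk.
set t := trunc_log 2 a in hk.
have h1 : (b * t.+1 <= nlogn b + nlogn n)%N.
  case: (leqP a b) => ab.
    apply: leq_trans (leq_addr _ _); rewrite /nlogn leq_mul2l ltnS leq_trunc_log //.
    by rewrite orbT.
  apply: leq_trans (leq_addl _ _); rewrite /nlogn.
  apply: leq_mul; [exact: ltnW (leq_trans ab an)| by rewrite ltnS leq_trunc_log].
have h2 : (n * t.+1 <= nlogn n)%N.
  by rewrite /nlogn leq_mul2l ltnS leq_trunc_log // orbT.
nia.
Qed.

Theorem theorem2 :
  exists c : nat,
  forall (R : realDomainType) (V : finType) (G : rel V) (wt : V -> V -> R)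
    (s : V) (beta : seq (V * V))
    (d0 : V -> R) (sg0 : V -> nat) (P0 : V -> {set V}),
    symmetric G -> irreflexive G ->
    (forall x y, wt x y = wt y x) -> (forall x y, 0 < wt x y) ->
    (forall e, e \in beta -> (e.1 != e.2) && ~~ G e.1 e.2) ->
    uniq [seq [set e.1; e.2] | e <- beta] ->
    (forall v, isdist G wt s v (d0 v)) ->
    (forall v, sg0 v = nsp G wt s v (d0 v)) ->
    (forall v, P0 v = [set u | G u v & d0 v == d0 u + wt u v]) ->
    forall (st : state R V) (k : nat),
      steps wt (init_state G beta d0 sg0 P0) st k ->
      (k <= c * (1 + nlogn (size beta)
                   + nlogn (normA (addbatch G beta)
                              (affected (addbatch G beta) wt s d0 sg0))))%N.
Proof.
exists 9 => R V G wt s beta d0 sg0 P0 Gs _ ws wp bn _ dd sgd _ st k Hs.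
have h := final Gs ws wp bn dd sgd Hs.
apply: (arith (a := #|affected (addbatch G beta) wt s d0 sg0|)); last exact: h.
rewrite /normA; exact: leq_addr.
Qed.
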